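(* Suppose there is a deterministic protocol solving Byzantine Broadcast with a value set containing $[N]$, tolerating $f$ faults, in which all honest processes decide within $T$ steps, and whose message and signature complexities are at most $mc$ and $sc$ in every execution (by relabeling, such a protocol exists with any prescribed process as broadcaster). Then for every $K\in\mathbb N$ there is a deterministic solution to the $K$-round Marker Problem tolerating $f$ faults, with $T$ steps per round and with message complexity at most $mc$ and signature complexity at most $sc$ per round.
   Context: Model. There are $N$ processes $P_1,\dots,P_N$; $[N]=\{1,\dots,N\}$. Time proceeds in discrete steps $t=0,1,2,\dots$ (synchronous network). At each step every process first receives all messages sent to it at the previous step, each together with the identity of its sender, and then may send messages to any processes; the behaviour of an honest process is given by its protocol, a deterministic function of its inputs and of all messages it has received so far. Communication is authenticated: a process $P_j$ can sign a string $m$, producing $(m)_{P_j}$; every sent message is signed by its sender; no process other than $P_j$ can produce a string containing $(m)_{P_j}$ unless it copied it from a message it received, except that corrupted processes can produce signatures of any corrupted process. An $f$-adversary knows all protocols and all inputs (including future inputs), chooses at time $0$ a set of at most $f$ processes to corrupt, and makes them behave arbitrarily subject to the signature rule; the other processes are honest and follow their protocol. $\mathcal H$ denotes the set of honest processes. A protocol tolerates $f$ faults if its required properties hold against every $f$-adversary. Message complexity = number of messages sent by honest processes; signature complexity = number of signatures contained in messages sent by honest processes, counted with multiplicity (each nested signature and each repetition counts). Byzantine Broadcast with value set $\mathcal V$ (a finite set containing $0$) and broadcaster $P_1$: at time $0$, $P_1$ receives an initial value $v_1\in\mathcal V$; each honest $P_n$ decides a value $d_n\in\mathcal V$ such that (consistency)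 all honest processes decide the same value, (validity) if $P_1$ is honest then every honest process decides $v_1$, (termination) every honest process decides in finite time. Marker Problem ($K$ rounds of $T$ steps). Time is divided into $K$ consecutive rounds of $T$ steps. At the end of each round every honest process decides either ''unmarked'' or ''marked, with previous marked process $d$'' where $d\in[N]\cup\{\perp\}$. The marked process $M$ of round $1$ is $P_1$ if $P_1\in\mathcal H$ and $\perp$ otherwise; the marked process of round $i+1$ is the honest process that decided ''marked'' at the end of round $i$, or $\perp$ if there is none. At the beginning of round $i$, if $M\neq\perp$, $M$ receives an input $I_i\in[N]$ (''send the marker to $P_{I_i}$''). Required at the end of every round $i$: (consistency) at most one honest process decides it is marked; (liveness) if $M\in\mathcal H$, $I_i=n$ and $P_n\in\mathcal H$, then $P_n$ decides it is marked with previous marked process $M$; (non-impersonation) if $M=\perp$ and an honest process decides it is marked with previous marked process $d$, then $d\notin\mathcal H$. The message/signature complexity per round counts messages/signatures sent by honest processes during one round. *)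

(* Defs.v *)
From HB Require Import structures.
From Stdlib Require List.
From mathcomp Require Import all_boot.
Set Implicit Arguments. Unset Strict Implicit. Unset Printing Implicit Defensive.

(* Processes are 'I_N; P_{k+1} is the ordinal k (so P_1 is ordinal 0).      *)

(* TSig p m is the signed string (m)_{P_p}.                                  *)
Inductive term (N : nat) : Type :=
| TData of nat
| TSig of 'I_N & term N
| TPair of term N & term N.
Arguments TData {N}.

Inductive subterm (N : nat) (u : term N) : term N -> Prop :=
| st_refl : subterm u u
| st_sig p t : subterm u t -> subterm u (TSig p t)
| st_pairl t1 t2 : subterm u t1 -> subterm u (TPair t1 t2)
| st_pairr t1 t2 : subterm u t2 -> subterm u (TPair t1 t2).

Fixpoint nsigs (N : nat) (t : term N) : nat :=
  match t with
  | TData _ => 0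
  | TSig _ m => (nsigs m).+1
  | TPair a b => nsigs a + nsigs b
  end.

(* an outgoing message: (receiver, content) *)
Definition msg_out N := ('I_N * term N)%type.
(* an incoming message: (authenticated sender, content) *)
Definition msg_in N := ('I_N * term N)%type.

Definition copied N (src : seq (seq (msg_in N))) (x : term N) : Prop :=
  exists s, List.In s src /\ exists m, List.In m s /\ subterm x m.2.

Definition sig_ok N (can_sign : 'I_N -> bool) (src : seq (seq (msg_in N)))
    (outs : seq (msg_out N)) : Prop :=
  forall o p x, List.In o outs -> subterm (TSig p x) o.2 ->
    can_sign p \/ copied src (TSig p x).

(* Traces. sent t n = messages sent by process n at step t.                 *)
Definition trace N := nat -> 'I_N -> seq (msg_out N).

(* messages received by n at step t (sent to n at step t-1) *)
Definition rcv N (sent : trace N) (n : 'I_N) (t : nat) : seq (msg_in N) :=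
  if t is t'.+1 then
    flatten [seq [seq (s, o.2) | o <- sent t' s & o.1 == n] | s <- enum 'I_N]
  else [::].

Definition hist N (sent : trace N) (n : 'I_N) (t : nat) : seq (seq (msg_in N)) :=
  [seq rcv sent n s | s <- iota 0 t.+1].

(* Corrupted processes (set C) behave arbitrarily subject to the signature
   rule: they may produce signatures of any corrupted process, and otherwise
   only copy signatures from messages they have received. *)
Definition adversary_ok N (C : {set 'I_N}) (sent : trace N) : Prop :=
  forall s t, s \in C -> sig_ok (fun p => p \in C) (hist sent s t) (sent t s).

Definition honest_msgs N (C : {set 'I_N}) (sent : trace N) (t : nat) : nat :=
  \sum_(n | n \notin C) size (sent t n).
Definition honest_sigs N (C : {set 'I_N}) (sent : trace N) (t : nat) : nat :=
  \sum_(n | n \notin C) sumn [seq nsigs o.2 | o <- sent t n].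

(* Byzantine Broadcast. Values are natural numbers in the finite value set
   V (a seq nat). The broadcaster gets input Some v1, others None.          *)
Record bb_protocol (N : nat) := BBProtocol {
  (* messages sent by process n at step t, given its input and the history
     of messages received at steps 0..t (a list of size t+1) *)
  bb_send : 'I_N -> option nat -> seq (seq (msg_in N)) -> seq (msg_out N);
  bb_dec : 'I_N -> option nat -> seq (seq (msg_in N)) -> option nat
}.

Definition bb_input N (p1 : 'I_N) (v1 : nat) (n : 'I_N) : option nat :=
  if n == p1 then Some v1 else None.

Definition bb_exec N (P : bb_protocol N) (p1 : 'I_N) (C : {set 'I_N}) (v1 : nat)
    (sent : trace N) : Prop :=
  adversary_ok C sent /\
  forall n t, n \notin C ->
    sent t n = bb_send P n (bb_input p1 v1 n) (hist sent n t).

(* decision of n made within T steps, i.e. from its view at step T *)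
Definition bb_decision N (P : bb_protocol N) (p1 : 'I_N) (v1 : nat)
    (sent : trace N) (T : nat) (n : 'I_N) : option nat :=
  bb_dec P n (bb_input p1 v1 n) (hist sent n T).

Definition bb_solves N (V : seq nat) (p1 : 'I_N) (f T mc sc : nat)
    (P : bb_protocol N) : Prop :=
  (forall n i h, sig_ok (fun p => p == n) h (bb_send P n i h)) /\
  forall (C : {set 'I_N}) (v1 : nat) (sent : trace N),
    #|C| <= f -> v1 \in V -> bb_exec P p1 C v1 sent ->
    [/\
        forall n, n \notin C ->
          exists2 d, bb_decision P p1 v1 sent T n = Some d & d \in V,
        forall n m, n \notin C -> m \notin C ->
          bb_decision P p1 v1 sent T n = bb_decision P p1 v1 sent T m,
        p1 \notin C -> forall n, n \notin C ->
          bb_decision P p1 v1 sent T n = Some v1,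
        forall t, \sum_(s < t) honest_msgs C sent s <= mc
      &
        forall t, \sum_(s < t) honest_sigs C sent s <= sc].

(* Rounds are numbered r = 0..K-1 (round r+1 of the paper);
   round r consists of steps r*T .. r*T+T-1. A decision is
   None = "unmarked", Some d = "marked with previous marked process d",
   where d = None stands for ⊥. *)
Record mk_protocol (N : nat) := MKProtocol {
  (* messages sent by n at step t given its history at steps 0..t; each
     entry is (input received at that step, messages received at it) *)
  mk_send : 'I_N -> seq (option 'I_N * seq (msg_in N)) -> seq (msg_out N);
  (* decision of n at the end of round r, given its history at steps
     0..(r+1)T-1 and the messages received at step (r+1)T *)
  mk_dec : 'I_N -> nat -> seq (option 'I_N * seq (msg_in N)) ->
           seq (msg_in N) -> option (option 'I_N)
}.

(* Mk r = the marked process of round r (None = ⊥); I r = input of round r.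
   The input I r is given at the beginning of round r (step r*T) to Mk r. *)
Definition mk_input N (K T : nat) (I : nat -> 'I_N) (Mk : nat -> option 'I_N)
    (n : 'I_N) (t : nat) : option 'I_N :=
  if [&& t %% T == 0, t %/ T < K & Mk (t %/ T) == Some n]
  then Some (I (t %/ T)) else None.

(* history of n at steps 0..t-1 *)
Definition mk_hist N (K T : nat) (I : nat -> 'I_N) (Mk : nat -> option 'I_N)
    (sent : trace N) (n : 'I_N) (t : nat) : seq (option 'I_N * seq (msg_in N)) :=
  [seq (mk_input K T I Mk n s, rcv sent n s) | s <- iota 0 t].

Definition mk_decision N (Q : mk_protocol N) (K T : nat) (I : nat -> 'I_N)
    (Mk : nat -> option 'I_N) (sent : trace N) (n : 'I_N) (r : nat)
    : option (option 'I_N) :=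
  mk_dec Q n r (mk_hist K T I Mk sent n (r.+1 * T)) (rcv sent n (r.+1 * T)).

(* an execution of Q: corrupted set C, inputs I, trace sent, and Mk the
   sequence of marked processes determined by the execution *)
Definition mk_exec N (Q : mk_protocol N) (p1 : 'I_N) (K T : nat)
    (C : {set 'I_N}) (I : nat -> 'I_N) (Mk : nat -> option 'I_N)
    (sent : trace N) : Prop :=
  [/\ adversary_ok C sent,
      forall n t, n \notin C ->
        sent t n = mk_send Q n (mk_hist K T I Mk sent n t.+1),
      Mk 0 = (if p1 \notin C then Some p1 else None)
    & forall r, Mk r.+1 =
        [pick n | (n \notin C) && (mk_decision Q K T I Mk sent n r != None)]].

Definition mk_solves N (p1 : 'I_N) (f K T mc sc : nat) (Q : mk_protocol N) : Prop :=
  (forall n h, sig_ok (fun p => p == n) (map snd h) (mk_send Q n h)) /\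
  forall (C : {set 'I_N}) (I : nat -> 'I_N) (Mk : nat -> option 'I_N)
         (sent : trace N),
    #|C| <= f -> mk_exec Q p1 K T C I Mk sent ->
    forall r, r < K ->
    [/\
        forall n m, n \notin C -> m \notin C ->
          mk_decision Q K T I Mk sent n r != None ->
          mk_decision Q K T I Mk sent m r != None -> n = m,
        forall M, Mk r = Some M -> I r \notin C ->
          mk_decision Q K T I Mk sent (I r) r = Some (Some M),
        Mk r = None -> forall n d, n \notin C ->
          mk_decision Q K T I Mk sent n r = Some (Some d) -> d \in C,
        \sum_(r * T <= s < r.+1 * T) honest_msgs C sent s <= mc
      &
        \sum_(r * T <= s < r.+1 * T) honest_sigs C sent s <= sc].

(* Main.v *)
Require Import Defs.
From HB Require Import structures.
From mathcomp Require Import all_boot.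
Set Implicit Arguments. Unset Strict Implicit. Unset Printing Implicit Defensive.

Section Terms.
Variable N : nat.
Variable s : 'I_N -> 'I_N.
Hypothesis sK : forall p, s (s p) = p.
Variable r : nat.

Fixpoint psi (t : term N) : term N :=
  match t with
  | TData k => TData k
  | TPair a b => TPair (psi a) (psi b)
  | TSig p z => match z with
      | TPair (TData r') y => if r' == r then TSig (s p) (psi y) else psi z
      | _ => psi z end
  end.

Fixpoint wf (t : term N) : bool :=
  match t with
  | TData _ => true
  | TPair a b => wf a && wf b
  | TSig _ z => match z with
      | TPair (TData r') y => (r' == r) && wf y
      | _ => false end
  end.

Fixpoint phi (t : term N) : term N :=
  match t with
  | TData k => TData k
  | TPair a b => TPair (phi a) (phi b)
  | TSig p x => TSig (s p) (TPair (TData r) (phi x))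
  end.

Lemma psiK x : psi (phi x) = x.
Proof. elim: x => //= [p x -> | a -> b ->]; by rewrite ?eqxx ?sK. Qed.

Lemma wf_phi x : wf (phi x).
Proof. elim: x => //= [p x -> | a -> b ->]; by rewrite ?eqxx. Qed.

Lemma phiK y : wf y -> phi (psi y) = y.
Proof.
elim: y => //= [p z IH | a IHa b IHb].
- case: z IH => // -[] // r' y IH /andP[/eqP E wy]; subst r'.
  rewrite eqxx /= sK.
  have := IH; rewrite /= wy => /(_ isT) [] ->; by [].
- by case/andP => /IHa -> /IHb ->.
Qed.

Lemma nsigs_psi y : wf y -> nsigs (psi y) = nsigs y.
Proof.
elim: y => //= [p z IH | a IHa b IHb].
- case: z IH => // -[] // r' y IH /andP[/eqP E wy]; subst r'.
  rewrite eqxx /=. have := IH; rewrite /= wy !add0n => /(_ isT) ->; by [].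
- by case/andP => /IHa -> /IHb ->.
Qed.

Lemma nsigs_phi x : nsigs (phi x) = nsigs x.
Proof. elim: x => //= [p x -> | a -> b ->] //. Qed.

Lemma wf_sub u m : subterm u m -> wf m -> wf u.
Proof.
elim => //= [p t _ IH | t1 t2 _ IH | t1 t2 _ IH].
- case: t IH => // -[] // r' y IH /andP[_ wy]. apply: IH => /=. exact: wy.
- by case/andP => /IH.
- by case/andP => _ /IH.
Qed.

Lemma sub_psi q x m : subterm (TSig q x) (psi m) ->
  exists y, x = psi y /\ subterm (TSig (s q) (TPair (TData r) y)) m.
Proof.
elim: m => /= [k | p z IH | a IHa b IHb] H.
- by inversion H.
- move: IH H; case E: z => [k|p' z'|a b] IH H;
    try by (have [y [-> Hy]] := IH H; exists y; split => //; apply: st_sig).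
  case: a E IH H => [r'|p' z'|a1 a2] E IH H;
    try by (have [y [-> Hy]] := IH H; exists y; split => //; apply: st_sig).
  case: eqP H => [Er|ne] H; last first.
    by have [y [-> Hy]] := IH H; exists y; split => //; apply: st_sig.
  subst r'. inversion H; subst.
  + exists b; rewrite sK; split => //; apply: st_refl.
  + have [y [-> Hy]] : exists y, x = psi y /\ subterm (TSig (s q) (TPair (TData r) y)) (TPair (TData r) b).
      by apply: IH => /=; apply: st_pairr.
    by exists y; split => //; apply: st_sig.
- inversion H; subst.
  + by have [y [-> Hy]] := IHa H1; exists y; split => //; apply: st_pairl.
  + by have [y [-> Hy]] := IHb H1; exists y; split => //; apply: st_pairr.
Qed.

Lemma psi_sub q y m : subterm (TSig (s q) (TPair (TData r) y)) m ->
  subterm (TSig q (psi y)) (psi m).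
Proof.
elim: m => /= [k | p z IH | a IHa b IHb] H.
- by inversion H.
- inversion H; subst.
  + rewrite eqxx sK; apply: st_refl.
  + match goal with Hx : subterm _ z |- _ => rename Hx into H2 end.
    move: IH H2; case E: z => [k|p' z'|a b] IH H2;
      try by (apply: IH).
    case: a E IH H2 => [r'|p' z'|a1 a2] E IH H2; try by apply: IH.
    case: eqP => [Er|ne]; last by apply: IH.
    subst r'. apply: st_sig.
    have := IH H2 => /= H3. inversion H3; subst => //.
    match goal with Hx : subterm _ (TData _) |- _ => inversion Hx end.
- inversion H; subst.
  + by apply: st_pairl; apply: IHa.
  + by apply: st_pairr; apply: IHb.
Qed.

Lemma sub_phi p' w m : subterm (TSig p' w) (phi m) ->
  exists q x, p' = s q /\ w = TPair (TData r) (phi x) /\ subterm (TSig q x) m.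
Proof.
elim: m => /= [k | p x IH | a IHa b IHb] H.
- by inversion H.
- inversion H; subst.
  + by exists p, x; split => //; split => //; apply: st_refl.
  + match goal with Hx : subterm _ (TPair _ _) |- _ => rename Hx into H2 end.
    inversion H2; subst.
    { match goal with Hx : subterm _ (TData _) |- _ => inversion Hx end. }
    match goal with Hx : subterm _ (phi _) |- _ => rename Hx into H3 end.
    have [q [x' [-> [-> Hs]]]] := IH H3.
    by exists q, x'; split => //; split => //; apply: st_sig.
- inversion H; subst.
  + by have [q [x [-> [-> Hs]]]] := IHa H1; exists q, x; do 2 split => //; apply: st_pairl.
  + by have [q [x [-> [-> Hs]]]] := IHb H1; exists q, x; do 2 split => //; apply: st_pairr.
Qed.

End Terms.

Lemma In_cat A (s1 s2 : seq A) x : List.In x (s1 ++ s2) <-> List.In x s1 \/ List.In x s2.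
Proof. elim: s1 => /= [|a s IH]; first by intuition. rewrite IH; tauto. Qed.

Lemma In_map A B (f : A -> B) s y : List.In y (map f s) <-> exists x, List.In x s /\ y = f x.
Proof.
elim: s => /= [|a s IH]; first by split => // -[x []].
split.
- case=> [E|H].
  + by exists a; split; [left|rewrite E].
  + have [x [H1 H2]] := proj1 IH H; by exists x; split; [right|].
- case=> x [[E|H] Ey]; [by left; rewrite E | right; apply/IH; by exists x].
Qed.

Lemma In_filter A (p : pred A) s x : List.In x (filter p s) <-> List.In x s /\ p x.
Proof.
elim: s => /= [|a s IH]; first by intuition.
case: ifP => pa /=; rewrite IH; split; try tauto.
- by case => [<-|[]]; auto.
- case=> [[<-|H] px]; [by rewrite pa in px | by auto].
Qed.

Lemma In_flatten A (ss : seq (seq A)) x :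
  List.In x (flatten ss) <-> exists s, List.In s ss /\ List.In x s.
Proof.
elim: ss => /= [|a ss IH]; first by split => // -[? []].
rewrite In_cat IH; split.
- by case=> [H|[s [H1 H2]]]; [exists a; auto | exists s; auto].
- by case=> s [[<-|H1] H2]; [left | right; exists s].
Qed.

Lemma In_mem (T : eqType) (x : T) s : x \in s -> List.In x s.
Proof. elim: s => //= a s IH; rewrite in_cons => /orP[/eqP ->|/IH]; auto. Qed.

Lemma mem_In (T : eqType) (x : T) s : List.In x s -> x \in s.
Proof. elim: s => //= a s IH [->|/IH]; rewrite in_cons ?eqxx // => ->; by rewrite orbT. Qed.

Lemma In_nth A (d : A) s i : i < size s -> List.In (nth d s i) s.
Proof. elim: s i => //= a s IH [|i] /=; auto. Qed.

Section Traces.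
Variable N : nat.

Lemma In_rcv (sent : trace N) n t m :
  List.In m (rcv sent n t.+1) <->
  exists o, List.In o (sent t m.1) /\ o.1 = n /\ m.2 = o.2.
Proof.
rewrite /rcv In_flatten; split.
- case=> l [/In_map [x [_ ->]] /In_map [o [/In_filter [Ho /eqP E] ->]]].
  by exists o.
- case: m => x c /= [o [Ho [E ->]]].
  exists [seq (x, o0.2) | o0 <- sent t x & o0.1 == n]; split.
  + apply/In_map; exists x; split => //; apply: In_mem; exact: mem_enum.
  + apply/In_map; exists o; split => //; apply/In_filter; split => //; by rewrite E.
Qed.

Lemma In_hist (sent : trace N) n t L :
  List.In L (hist sent n t) <-> exists s, s <= t /\ L = rcv sent n s.
Proof.
rewrite /hist In_map; split.
- case=> s [/mem_In]; rewrite mem_iota add0n ltnS => H ->; by exists s.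
- case=> s [H ->]; exists s; split => //; apply: In_mem; by rewrite mem_iota add0n ltnS.
Qed.

Lemma hist_ext (A B : trace N) n t :
  (forall s q, s < t -> A s q = B s q) -> hist A n t = hist B n t.
Proof.
move=> H; apply/eq_in_map => -[|s] //; rewrite mem_iota add0n ltnS => Hs /=.
by congr flatten; apply: eq_map => x; rewrite H.
Qed.

Section Ext.
Variables (T : nat) (seed : trace N) (C : {set 'I_N})
  (step : 'I_N -> seq (seq (msg_in N)) -> seq (msg_out N)).

Fixpoint tr k : trace N :=
  match k with
  | 0 => fun _ _ => [::]
  | k'.+1 => fun j q => if j < T then seed j q else
             if q \in C then [::] else step q (hist (tr k') q j)
  end.

Definition ext : trace N := fun j q => tr j.+1 j q.

Lemma tr_stable j : forall k, j < k -> forall q, tr k j q = ext j q.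
Proof.
elim/ltn_ind: j => j IH [|k] // Hk q; rewrite /ext /=.
case: ifP => // _; case: ifP => // _; congr step.
apply: hist_ext => s q' Hs; rewrite IH //; last exact: leq_trans Hs Hk.
by rewrite IH.
Qed.

Lemma extE j q : ext j q =
  if j < T then seed j q else if q \in C then [::] else step q (hist ext q j).
Proof.
rewrite {1}/ext /=; case: ifP => // _; case: ifP => // _; congr step.
apply: hist_ext => s q' Hs; exact: tr_stable.
Qed.
End Ext.

Definition sw (z0 b n : 'I_N) := if n == z0 then b else if n == b then z0 else n.

Lemma swK z0 b n : sw z0 b (sw z0 b n) = n.
Proof.
rewrite /sw; case: (eqVneq n z0) => [->|nz].
- by case: (eqVneq b z0) => [->|bz] //; rewrite eqxx.
- case: (eqVneq n b) => [->|nb]; first by rewrite eqxx.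
  by rewrite (negbTE nz) (negbTE nb).
Qed.

Lemma sw_z0 z0 b n : (sw z0 b n == z0) = (n == b).
Proof.
rewrite /sw; case: (eqVneq n z0) => [->|nz]; first by rewrite eq_sym.
case: (eqVneq n b) => [E|nb]; first by rewrite eqxx.
by rewrite (negbTE nz).
Qed.

Lemma sw_inj z0 b : injective (sw z0 b).
Proof. exact: (can_inj (swK z0 b)). Qed.

End Traces.

Section Proto.
Variables (N : nat) (hN : 0 < N) (T : nat) (P : bb_protocol N).
Local Notation z0 := (Ordinal hN).
Definition ent := (option 'I_N * seq (msg_in N))%type.

Definition bbrcv (b : 'I_N) (r : nat) (L : seq (msg_in N)) : seq (msg_in N) :=
  flatten [seq [seq (q, psi (sw z0 b) r m.2) | m <- L & (m.1 == sw z0 b q) && wf r m.2]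
          | q <- enum 'I_N].

Definition bbhistG (b : 'I_N) r (G : nat -> ent) j : seq (seq (msg_in N)) :=
  [::] :: [seq bbrcv b r (G (r * T + s)).2 | s <- iota 1 j].

Definition bbinpG (b : 'I_N) r (n : 'I_N) (G : nat -> ent) : option nat :=
  if n == b then Some (if (G (r * T)).1 is Some i then (val i).+1 else 0) else None.

Definition decode (d : option nat) : option 'I_N :=
  if d is Some k.+1 then insub k else None.

Definition bbval (n : 'I_N) G r (b : 'I_N) := bb_dec P (sw z0 b n) (bbinpG b r n G) (bbhistG b r G T).

Fixpoint bcomp n G r : 'I_N :=
  match r with
  | 0 => z0
  | r'.+1 => odflt z0 (decode (bbval n G r' (bcomp n G r')))
  end.

Definition sendG n G t : seq (msg_out N) :=
  [seq (sw z0 (bcomp n G (t %/ T)) o.1, phi (sw z0 (bcomp n G (t %/ T))) (t %/ T) o.2)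
  | o <- bb_send P (sw z0 (bcomp n G (t %/ T)) n)
           (bbinpG (bcomp n G (t %/ T)) (t %/ T) n G)
           (bbhistG (bcomp n G (t %/ T)) (t %/ T) G (t %% T))].

Definition decG n G r : option (option 'I_N) :=
  if decode (bbval n G r (bcomp n G r)) == Some n then Some (Some (bcomp n G r)) else None.

Definition Gof (h : seq ent) : nat -> ent := fun i => nth (None, [::]) h i.

Definition Qp : mk_protocol N :=
  MKProtocol (fun n h => sendG n (Gof h) (size h).-1)
             (fun n r h last => decG n (Gof (rcons h (None, last))) r).

Lemma bbhist_ext b r G G' j :
  (forall s, 0 < s <= j -> (G (r * T + s)).2 = (G' (r * T + s)).2) ->
  bbhistG b r G j = bbhistG b r G' j.
Proof.
move=> H; rewrite /bbhistG; congr cons; apply/eq_in_map => s.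
rewrite mem_iota => /andP[s1 s2]; rewrite H // s1 /=; by rewrite add1n ltnS in s2.
Qed.

Lemma bbinp_ext b r n G G' : (G (r * T)).1 = (G' (r * T)).1 ->
  bbinpG b r n G = bbinpG b r n G'.
Proof. by rewrite /bbinpG => ->. Qed.

Lemma bcomp_ext n G G' r : (forall i, i <= r * T -> G i = G' i) ->
  bcomp n G r = bcomp n G' r.
Proof.
elim: r => //= r IH H.
have E : bcomp n G r = bcomp n G' r.
  by apply: IH => i Hi; apply: H; apply: leq_trans Hi _; rewrite mulSn leq_addl.
rewrite E /bbval (@bbinp_ext _ _ _ G G'); last by rewrite H // mulSn leq_addl.
rewrite (@bbhist_ext _ _ G G') // => s /andP[_ Hs]; rewrite H //.
by rewrite mulSn [T + _]addnC leq_add2l.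
Qed.

Lemma sendG_ext n G G' t : (forall i, i <= t -> G i = G' i) ->
  sendG n G t = sendG n G' t.
Proof.
move=> H; rewrite /sendG.
have Ht : t %/ T * T + t %% T = t by rewrite -divn_eq.
rewrite (@bcomp_ext n G G'); last by move=> i Hi; apply: H; apply: leq_trans Hi (leq_divM _ _).
rewrite (@bbinp_ext _ _ _ G G'); last by rewrite H // leq_divM.
rewrite (@bbhist_ext _ _ G G') // => s /andP[_ Hs]; rewrite H //.
by rewrite -{2}Ht leq_add2l.
Qed.

Lemma decG_ext n G G' r : 0 < T ->
  (forall i, i < r.+1 * T -> G i = G' i) ->
  (G (r.+1 * T)).2 = (G' (r.+1 * T)).2 ->
  decG n G r = decG n G' r.
Proof.
move=> T0 H H2; rewrite /decG /bbval.
have Hr : r * T < r.+1 * T by rewrite mulSn addnC -{1}(addn0 (r * T)) ltn_add2l.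
rewrite (@bcomp_ext n G G'); last by move=> i Hi; apply: H; apply: leq_ltn_trans Hi Hr.
rewrite (@bbinp_ext _ _ _ G G'); last by rewrite H.
rewrite (@bbhist_ext _ _ G G') // => s /andP[_ Hs].
move: Hs; rewrite leq_eqVlt => /orP[/eqP ->|Hs]; first by rewrite -[r * T + T]addnC -mulSn H2.
by rewrite H // mulSn [T + _]addnC ltn_add2l.
Qed.

Hypothesis Hsig : forall n i h, sig_ok (fun p => p == n) h (bb_send P n i h).

Lemma sendG_sig n h o p w :
  List.In o (sendG n (Gof h) (size h).-1) -> subterm (TSig p w) o.2 ->
  (p = n /\ exists y, w = TPair (TData ((size h).-1 %/ T)) y) \/
  copied (map snd h) (TSig p w).
Proof.
set t := (size h).-1; set r := t %/ T; set j := t %% T; set b := bcomp n (Gof h) r.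
rewrite /sendG -/r -/j -/b => /In_map [o0 [Ho0 ->]] /= Hs.
have [q [x [Ep [Ew Hq]]]] := sub_phi Hs.
have [/eqP Eq | Hc] := Hsig Ho0 Hq.
  by left; split; [rewrite Ep Eq swK | exists (phi (sw z0 b) r x)].
right; case: Hc => L [/= HL [m [Hm Hsm]]].
case: HL => [HL|]; first by rewrite -HL in Hm.
case/In_map => s [/mem_In Hs' EL]; rewrite EL in Hm.
move: Hs'; rewrite mem_iota add1n ltnS => /andP[s1 s2].
case/In_flatten: Hm => l [/In_map [q' [_ El]] Hm]; rewrite El in Hm.
case/In_map: Hm => m' [/In_filter [Hm' /andP[_ wm]] Em]; rewrite Em /= in Hsm.
have [y [Ex Hy]] := sub_psi (swK z0 b) Hsm.
have wy : wf r y.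
  by have := wf_sub Hy wm => /= /andP[].
exists (Gof h (r * T + s)).2; split.
  apply/In_map; exists (Gof h (r * T + s)); split => //; apply: In_nth.
  have Ht : r * T + j = t by rewrite /r /j -divn_eq.
  have Hle : r * T + s <= t by rewrite -Ht leq_add2l.
  have tpos : 0 < t by apply: leq_trans Hle; rewrite addnC; apply: leq_trans s1 (leq_addr _ _).
  move: tpos Hle; rewrite /t; case: (size h) => [|k] /= H1 H2; first by [].
  exact: leq_ltn_trans H2 (ltnSn _).
exists m'; split => //.
by rewrite Ep Ew Ex (phiK (swK z0 b)) // swK in Hy *.
Qed.

End Proto.

Lemma flatten_single (A : Type) (N : nat) (B : 'I_N -> seq A) z :
  (forall y, y != z -> B y = [::]) -> flatten [seq B y | y <- enum 'I_N] = B z.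
Proof.
move=> H.
have : uniq (enum 'I_N) /\ z \in enum 'I_N by split; [exact: enum_uniq | exact: mem_enum].
elim: (enum 'I_N) => [[_ //]|y s IH [/andP[ys us]]] /=; rewrite in_cons.
case: (eqVneq z y) => [E|ne] /= Hz.
- subst y; rewrite -[RHS]cats0; congr cat.
  elim: s ys {IH us Hz} => //= y s IH'; rewrite in_cons negb_or => /andP[zy zs].
  by rewrite H 1?eq_sym // IH'.
- by rewrite H 1?eq_sym // IH.
Qed.

Section Exec.
Variables (N : nat) (hN : 0 < N) (T : nat) (P : bb_protocol N) (f mc sc : nat)
  (V : seq nat) (K : nat).
Hypothesis T0 : 0 < T.
Hypothesis HV0 : 0 \in V.
Hypothesis HV : forall n : 'I_N, n.+1 \in V.
Hypothesis Hbb : bb_solves V (Ordinal hN) f T mc sc P.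
Variables (C : {set 'I_N}) (I : nat -> 'I_N) (Mk : nat -> option 'I_N) (sent : trace N).
Hypothesis HC : #|C| <= f.
Hypothesis Hex : mk_exec (Qp hN T P) (Ordinal hN) K T C I Mk sent.
Local Notation z0 := (Ordinal hN).

Definition Gn (n : 'I_N) : nat -> ent N := fun s => (mk_input K T I Mk n s, rcv sent n s).

Lemma Hsig' : forall n i h, sig_ok (fun p => p == n) h (bb_send P n i h).
Proof. by case: Hbb. Qed.

Lemma hist_snd n t : map snd (mk_hist K T I Mk sent n t.+1) = hist sent n t.
Proof. by rewrite /mk_hist -map_comp. Qed.

Lemma sent_honest n t : n \notin C -> sent t n = sendG hN T P n (Gn n) t.
Proof.
case: Hex => _ Hs _ _ Hn; rewrite Hs //= size_map size_iota /=.
apply: sendG_ext => i Hi.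
by rewrite /Gof (nth_map 0) ?size_iota // nth_iota.
Qed.

Lemma dec_honest n r :
  mk_decision (Qp hN T P) K T I Mk sent n r = decG hN T P n (Gn n) r.
Proof.
rewrite /mk_decision /=; apply: decG_ext => //.
- move=> i Hi; rewrite /Gof nth_rcons size_map size_iota Hi.
  by rewrite (nth_map 0) ?size_iota // nth_iota.
- by rewrite /Gof nth_rcons size_map size_iota ltnn eqxx.
Qed.

Lemma copied_bound z t p r' y :
  (forall s, s < t -> forall z o, List.In o (sent s z) ->
     subterm (TSig p (TPair (TData r') y)) o.2 -> r' * T <= s) ->
  copied (hist sent z t) (TSig p (TPair (TData r') y)) -> r' * T <= t.
Proof.
move=> IH [L [/In_hist [s [Hs ->]] [m [Hm Hsub]]]].
case: s Hs Hm => [|s] Hs Hm; first by [].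
have [o [Ho [_ E]]] := proj1 (In_rcv _ _ _ _) Hm.
rewrite E in Hsub; apply: leq_trans (IH s Hs _ _ Ho Hsub) (ltnW Hs).
Qed.

Lemma TG t : forall z o p r' y, List.In o (sent t z) ->
  subterm (TSig p (TPair (TData r') y)) o.2 -> p \notin C -> r' * T <= t.
Proof.
elim/ltn_ind: t => t IH z o p r' y Ho Hs Hp.
have IH' : forall s, s < t -> forall z o, List.In o (sent s z) ->
     subterm (TSig p (TPair (TData r') y)) o.2 -> r' * T <= s.
  by move=> s Hst z' o' Ho' Hs'; apply: IH Ho' Hs' Hp.
case: (boolP (z \in C)) => Hz.
- case: Hex => Hadv _ _ _.
  have [Hpc|Hc] := Hadv z t Hz o p _ Ho Hs; first by rewrite Hpc in Hp.
  exact: copied_bound IH' Hc.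
- case: Hex => _ Hsnd _ _; rewrite Hsnd // in Ho.
  have := sendG_sig Hsig' Ho Hs; rewrite hist_snd size_map size_iota /=.
  case=> [[_ [y' [E _]]]|Hc]; last exact: copied_bound IH' Hc.
  by rewrite E leq_divM.
Qed.

Lemma Mk_honest r M : Mk r = Some M -> M \notin C.
Proof.
case: Hex => _ _ H0 HS; case: r => [|r].
- by rewrite H0; case: ifP => // H [<-].
- rewrite HS; case: pickP => // n /andP[Hn _] [<-]; exact: Hn.
Qed.

Section Round.
Variables (r : nat) (b : 'I_N).
Hypothesis Hr : r < K.
Hypothesis Hb : forall n, n \notin C -> bcomp hN T P n (Gn n) r = b.
Hypothesis HM : forall M, Mk r = Some M -> M = b.

Local Notation sg := (sw z0 b).
Definition Cp : {set 'I_N} := [set q | sg q \in C].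
Definition v1 := if Mk r is Some _ then (val (I r)).+1 else 0.
Definition seed : trace N := fun j q =>
  [seq (sg o.1, psi sg r o.2) | o <- sent (r * T + j) (sg q) & wf r o.2 || (o.1 \in C)].
Definition stepf q H := bb_send P q (bb_input z0 v1 q) H.
Definition E := ext T seed Cp stepf.

Lemma inv_list (cond : pred (msg_out N)) l :
  [seq (sg o.1, psi sg r o.2) | o <- [seq (sg o.1, phi sg r o.2) | o <- l] & wf r o.2 || cond o] = l.
Proof.
elim: l => //= o l IH; rewrite wf_phi /= IH swK (psiK (swK z0 b)); by case: o.
Qed.

Lemma divE j : j < T -> (r * T + j) %/ T = r.
Proof. by move=> Hj; rewrite divnMDl // divn_small // addn0. Qed.
Lemma modE j : j < T -> (r * T + j) %% T = j.
Proof. by move=> Hj; rewrite modnMDl modn_small. Qed.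

Lemma sent_round j n : n \notin C -> j < T ->
  sent (r * T + j) n = [seq (sg o.1, phi sg r o.2) | o <-
     bb_send P (sg n) (bbinpG T b r n (Gn n)) (bbhistG hN T b r (Gn n) j)].
Proof.
move=> Hn Hj; rewrite sent_honest // /sendG divE // modE // Hb //.
Qed.

Lemma E_honest j n : n \notin C -> j < T ->
  E j (sg n) = bb_send P (sg n) (bbinpG T b r n (Gn n)) (bbhistG hN T b r (Gn n) j).
Proof.
move=> Hn Hj; rewrite /E extE Hj /seed swK sent_round //; exact: inv_list.
Qed.

Lemma rcvE s n : n \notin C -> 0 < s <= T ->
  rcv E (sg n) s = bbrcv hN b r (rcv sent n (r * T + s)).
Proof.
move=> Hn; case: s => [|s] // /andP[_ Hs]; rewrite addnS /rcv /bbrcv.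
congr flatten; apply: eq_map => x.
rewrite /E extE Hs /seed.
rewrite filter_flatten map_flatten -map_comp -map_comp.
rewrite (@flatten_single _ _ _ (sg x)); last first.
  move=> y ne; elim: (sent (r * T + s) y) => //= o l IH.
  by case: ifP => //= _; rewrite (negbTE ne).
elim: (sent (r * T + s) (sg x)) => //= -[a c] l IH /=.
case: (eqVneq a n) => [Ea|ne].
- subst a; rewrite (negbTE Hn) orbF; case Hw: (wf r c) => /=; by rewrite ?eqxx ?Hw /= IH.
- case: (_ || _) => /=; by rewrite ?(inj_eq (@sw_inj _ z0 b)) ?(negbTE ne) /= IH.
Qed.

Lemma histE j n : n \notin C -> j <= T -> hist E (sg n) j = bbhistG hN T b r (Gn n) j.
Proof.
move=> Hn Hj; rewrite /hist /bbhistG /=; congr cons.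
apply/eq_in_map => s; rewrite mem_iota => /andP[s1 s2].
rewrite rcvE // s1 /=; apply: leq_trans Hj; by rewrite add1n ltnS in s2.
Qed.

Lemma inpE n : n \notin C -> bbinpG T b r n (Gn n) = bb_input z0 v1 (sg n).
Proof.
move=> Hn; rewrite /bbinpG /bb_input sw_z0.
case: (eqVneq n b) => [En|//]; congr Some.
rewrite /Gn /mk_input modnMl eqxx mulnK // Hr /= /v1.
case EM: (Mk r) => [M|] //=.
by rewrite (HM EM) En eqxx.
Qed.

Lemma E_exec : bb_exec P z0 Cp v1 E.
Proof.
split.
- move=> q t Hq; rewrite /E extE; case: ifP => Ht; last first.
    by rewrite Hq => o p x [].
  move=> o p x /In_map [o0 [/In_filter [Ho0 Hc] Eo]] Hs; rewrite Eo /= in Hs.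
  have [y [Ex Hy]] := sub_psi (swK z0 b) Hs.
  have HqC : sg q \in C by move: Hq; rewrite inE.
  case: (boolP (sg p \in C)) => HpC; first by left; rewrite inE.
  case: Hex => Hadv _ _ _.
  have [|Hcop] := Hadv (sg q) (r * T + t) HqC o0 (sg p) _ Ho0 Hy.
    by rewrite (negbTE HpC).
  right; case: Hcop => L [/In_hist [s [Hs' ->]] [m [Hm Hsub]]].
  case: s Hs' Hm => [|s] Hs' Hm; first by [].
  have [o1 [Ho1 [Eo1 Em]]] := proj1 (In_rcv _ _ _ _) Hm.
  rewrite Em in Hsub.
  have Hrs := TG Ho1 Hsub HpC.
  set k := s - r * T.
  have Es : s = r * T + k by rewrite subnKC.
  have Hk : k < t by rewrite -(ltn_add2l (r * T)) -Es.
  exists (rcv E q k.+1); split.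
    apply/In_hist; exists k.+1; split => //.
  exists (sg m.1, psi sg r o1.2); split.
    apply/In_rcv; exists (sg o1.1, psi sg r o1.2); split; last by rewrite /= Eo1 swK.
    rewrite /= /E extE (ltn_trans Hk Ht) /seed swK -Es.
    apply/In_map; exists o1; split => //; apply/In_filter; split => //.
    by rewrite Eo1 HqC orbT.
  by rewrite Ex; exact: (psi_sub (swK z0 b) Hsub).
- move=> q t Hq.
  have Hn : sg q \notin C by move: Hq; rewrite inE.
  case: (ltnP t T) => Ht.
  - have Eq : q = sg (sg q) by rewrite swK.
    by rewrite Eq E_honest // inpE // histE // ltnW.
  - by rewrite /E extE ltnNge Ht /= (negbTE Hq).
Qed.

Lemma card_Cp : #|Cp| = #|C|.
Proof. exact: card_preimset (@sw_inj _ z0 b). Qed.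

Lemma sum_eq (F G : nat -> 'I_N -> nat) :
  (forall j n, j < T -> n \notin C -> F (r * T + j) n = G j (sg n)) ->
  \sum_(r * T <= s < r.+1 * T) \sum_(n | n \notin C) F s n =
  \sum_(s < T) \sum_(q | q \notin Cp) G s q.
Proof.
move=> H.
rewrite mulSn [T + _]addnC -{1}(add0n (r * T)) big_addn addKn big_mkord.
apply: eq_bigr => j _.
rewrite [RHS](reindex_inj (@sw_inj _ z0 b)) /=.
apply: eq_big => n; first by rewrite inE swK.
by move=> Hn; rewrite addnC H.
Qed.

Lemma round : exists d, [/\ d \in V,
  forall n, n \notin C -> bbval hN T P n (Gn n) r b = Some d,
  b \notin C -> d = v1,
  \sum_(r * T <= s < r.+1 * T) honest_msgs C sent s <= mc
& \sum_(r * T <= s < r.+1 * T) honest_sigs C sent s <= sc].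
Proof.
have v1V : v1 \in V by rewrite /v1; case: (Mk r) => [?|] //; apply: HV.
have HCp : #|Cp| <= f by rewrite card_Cp.
have [Hterm Hcons Hval Hmc Hsc] := Hbb.2 Cp v1 E HCp v1V E_exec.
have bvE n : n \notin C -> bbval hN T P n (Gn n) r b = bb_decision P z0 v1 E T (sg n).
  by move=> Hn; rewrite /bbval /bb_decision inpE // histE.
have Hcm : \sum_(r * T <= s < r.+1 * T) honest_msgs C sent s <= mc.
  rewrite /honest_msgs (@sum_eq _ (fun s q => size (E s q))); first by have := Hmc T; rewrite /honest_msgs.
  move=> j n Hj Hn; rewrite E_honest // sent_round // size_map //.
have Hcs : \sum_(r * T <= s < r.+1 * T) honest_sigs C sent s <= sc.
  rewrite /honest_sigs (@sum_eq _ (fun s q => sumn [seq nsigs o.2 | o <- E s q])); first by have := Hsc T; rewrite /honest_sigs.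
  move=> j n Hj Hn; rewrite E_honest // sent_round // -map_comp.
  by congr sumn; apply: eq_map => o /=; rewrite nsigs_phi.
have sgC n : (sg n \notin Cp) = (n \notin C) by rewrite inE swK.
case: (pickP (fun n => n \notin C)) => [n0 Hn0|none]; last first.
  by exists v1; split => //; try (move=> n; by rewrite none).
have Hn0' : sg n0 \notin Cp by rewrite sgC.
have [d Hd dV] := Hterm _ Hn0'.
exists d; split => //.
- move=> n Hn; rewrite bvE // (Hcons _ (sg n0)) ?sgC //.
- move=> Hbc.
  have : z0 \notin Cp by rewrite inE /sw eqxx.
  move/Hval => /(_ (sg n0)); rewrite sgC Hn0 Hd => /(_ isT) [] //.
Qed.

End Round.

Lemma S_inv : forall r, r <= K -> exists b,
  (forall n, n \notin C -> bcomp hN T P n (Gn n) r = b) /\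
  (forall M, Mk r = Some M -> M = b).
Proof.
elim=> [_|r IH Hr].
- exists z0; split => // M; case: Hex => _ _ -> _; by case: ifP => // _ [].
- have [b [Hb HM]] := IH (ltnW Hr).
  have [d [_ Hd _ _ _]] := round Hr Hb HM.
  exists (odflt z0 (decode N (Some d))); split.
  + by move=> n Hn /=; rewrite Hb // Hd.
  + move=> M; case: Hex => _ _ _ -> ; case: pickP => // n /andP[Hn].
    rewrite dec_honest /decG Hb // Hd; case: (decode N (Some d)) => [k|] //=.
    by case: (eqVneq (Some k) (Some n)) => [[->] _ [<-]|_].
Qed.

End Exec.

Lemma solves_pos N (hN : 0 < N) T P f mc sc V K :
  0 < T -> 0 \in V -> (forall n : 'I_N, n.+1 \in V) ->
  bb_solves V (Ordinal hN) f T mc sc P ->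
  mk_solves (Ordinal hN) f K T mc sc (Qp hN T P).
Proof.
move=> T0 HV0 HV Hbb; split.
- move=> n h o p x Ho Hs.
  have Hsig : forall n i h, sig_ok (fun p => p == n) h (bb_send P n i h) by case: Hbb.
  by have [[-> _]|Hc] := sendG_sig Hsig Ho Hs; [left | right].
- move=> C I Mk sent HC Hex r Hr.
  have [b [Hb HM]] := S_inv T0 HV0 HV Hbb HC Hex (ltnW Hr).
  have [d [dV Hd Hv Hmc Hsc]] := round T0 HV0 HV Hbb HC Hex Hr Hb HM.
  have Hdec : forall n, n \notin C -> mk_decision (Qp hN T P) K T I Mk sent n r =
      if decode N (Some d) == Some n then Some (Some b) else None.
    by move=> n Hn; rewrite dec_honest // /decG Hb // Hd.
  split => //.
  + move=> n m Hn Hm; rewrite !Hdec //.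
    case: (decode N (Some d)) => [k|] //=.
    case: (eqVneq (Some k) (Some n)) => [[<-]|_] //.
    by case: (eqVneq (Some k) (Some m)) => [[<-]|_].
  + move=> M EM HI.
    have Eb := HM M EM.
    have Hbc : b \notin C by have := Mk_honest Hex EM; rewrite Eb.
    by rewrite Hdec // (Hv Hbc) /v1 EM /= valK eqxx Eb.
  + move=> EM n d' Hn; rewrite Hdec //.
    case: ifP => // Hif [<-].
    case: (boolP (b \in C)) => // Hbc.
    by move: Hif; rewrite (Hv Hbc) /v1 EM.
Qed.

Lemma T0_single N (hN : 0 < N) P f mc sc V :
  0 \in V -> (forall n : 'I_N, n.+1 \in V) ->
  bb_solves V (Ordinal hN) f 0 mc sc P -> forall n : 'I_N, n = Ordinal hN.
Proof.
move=> HV0 HV Hbb n; apply/eqP/negPn/negP => ne.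
pose Ev v := ext 0 (fun _ _ => [::]) set0
   (fun q H => bb_send P q (bb_input (Ordinal hN) v q) H).
have Hex v : bb_exec P (Ordinal hN) set0 v (Ev v).
  split; first by move=> s t; rewrite in_set0.
  by move=> q t _; rewrite /Ev extE /= in_set0.
have Hf : #|(set0 : {set 'I_N})| <= f by rewrite cards0.
have Hd v : v \in V -> bb_dec P n None [:: [::]] = Some v.
  move=> vV; have [_ _ Hval _ _] := Hbb.2 set0 v (Ev v) Hf vV (Hex v).
  have Hz : Ordinal hN \notin (set0 : {set 'I_N}) by rewrite in_set0.
  have Hn : n \notin (set0 : {set 'I_N}) by rewrite in_set0.
  have := Hval Hz n Hn.
  by rewrite /bb_decision /bb_input (negbTE ne).
have := Hd 0 HV0; rewrite (Hd 1) //; exact: (HV (Ordinal hN)).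
Qed.

Definition Q0 N (hN : 0 < N) : mk_protocol N :=
  MKProtocol (fun _ _ => [::]) (fun _ _ _ _ => Some (Some (Ordinal hN))).

Lemma solves_zero N (hN : 0 < N) f K mc sc :
  (forall n : 'I_N, n = Ordinal hN) -> mk_solves (Ordinal hN) f K 0 mc sc (Q0 hN).
Proof.
move=> allz; split; first by move=> n h o p x [].
move=> C I Mk sent HC Hex r Hr; split.
- by move=> n m _ _ _ _; rewrite (allz n) (allz m).
- by move=> M EM _; rewrite /mk_decision /= (allz M).
- move=> EM n d Hn; exfalso; case: Hex => _ _ H0 HS.
  case: r Hr EM => [|r] Hr.
  + by rewrite H0 -(allz n) Hn.
  + rewrite HS; case: pickP => // /(_ n); by rewrite Hn.
- by rewrite !muln0 big_geq.
- by rewrite !muln0 big_geq.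
Qed.

Theorem mainTheorem2 (N : nat) (hN : 0 < N) (f T mc sc : nat)
    (V : seq nat) (P : bb_protocol N) :
  0 \in V -> (forall n : 'I_N, n.+1 \in V) ->
  bb_solves V (Ordinal hN) f T mc sc P ->
  forall K : nat, exists Q : mk_protocol N,
    mk_solves (Ordinal hN) f K T mc sc Q.
Proof.
move=> HV0 HV Hbb K.
case: (posnP T) => [T0|Tpos].
- subst T; exists (Q0 hN); apply: solves_zero; exact: T0_single HV0 HV Hbb.
- exists (Qp hN T P); exact: (solves_pos K Tpos HV0 HV Hbb).
Qed.
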